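(* Let $C$ be a projective linear code of length $n$ over $\mathbb{Z}_4$ with exactly two nonzero Lee weights $w_1<w_2$. Then the following are equivalent: (1) $C$ is Plotkin-optimal; (2) $w_1=n$; (3) $w_2=|C|/2$.
   Context: A linear code of length $n$ over $\mathbb{Z}_4$ is a $\mathbb{Z}_4$-submodule of $\mathbb{Z}_4^n$. Lee weight: $w_L(0)=0,w_L(1)=1,w_L(2)=2,w_L(3)=1$, additive on vectors; $d_L(C)$ is the minimum nonzero Lee weight. $C$ is Plotkin-optimal if $d_L(C)=\lfloor\frac{|C|}{|C|-1}n\rfloor$. $C$ is projective if its dual with respect to $\sum x_iy_i\in\mathbb{Z}_4$ has minimum Lee distance at least $3$. *)

(* Defs.v *)
From mathcomp Require Import all_boot all_order all_algebra.
Set Implicit Arguments. Unset Strict Implicit. Unset Printing Implicit Defensive.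
Import GRing.Theory.
Local Open Scope ring_scope.

Definition Z4 := 'Z_4.

Definition leeZ4 (a : Z4) : nat := minn (val a) (4 - val a).

Definition wL n (x : 'rV[Z4]_n) : nat := (\sum_(i < n) leeZ4 (x ord0 i))%N.

Definition is_Z4_linear n (C : {set 'rV[Z4]_n}) : Prop :=
  [/\ (0 : 'rV[Z4]_n) \in C,
      (forall x y, x \in C -> y \in C -> x + y \in C) &
      (forall (a : Z4) x, x \in C -> a *: x \in C)].

(* Minimum nonzero Lee weight (defaults to 2n, the maximal weight, if C = {0}) *)
Definition dL n (C : {set 'rV[Z4]_n}) : nat :=
  \big[minn/(2 * n)%N]_(x in C | x != 0) wL x.

Definition dual_code n (C : {set 'rV[Z4]_n}) : {set 'rV[Z4]_n} :=
  [set y : 'rV[Z4]_n | [forall x in C, \sum_(i < n) x ord0 i * y ord0 i == 0]].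

Definition projective n (C : {set 'rV[Z4]_n}) : Prop :=
  forall y, y \in dual_code C -> y != 0 -> (3 <= wL y)%N.

Definition plotkin_optimal n (C : {set 'rV[Z4]_n}) : Prop :=
  dL C = ((#|C| * n) %/ (#|C| - 1))%N.

Definition nonzero_weights_are n (C : {set 'rV[Z4]_n}) (w1 w2 : nat) : Prop :=
  forall w, (exists2 x, x \in C & x != 0 /\ wL x = w) <-> (w = w1 \/ w = w2).

(* Main.v *)
Require Import Defs.
From mathcomp Require Import all_boot all_order all_algebra zify ring lra.
Import GRing.Theory.
Set Implicit Arguments. Unset Strict Implicit. Unset Printing Implicit Defensive.
Local Open Scope ring_scope.
Definition chi (a : Z4) : int :=
  if val a == 0%N then 1 else if val a == 2%N then -1 else 0.
Definition z4s : seq Z4 := [:: 0; 1; 2; 3].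
Lemma z4sP (a : Z4) : a \in z4s.
Proof. by case: a => -[|[|[|[|m]]]] Hm //=. Qed.
Lemma all_z4 (P : pred Z4) : all P z4s -> forall a, P a.
Proof. by move/allP => H a; apply: H; apply: z4sP. Qed.
Lemma lee_chi (a : Z4) : (leeZ4 a)%:Z = 1 - chi a.
Proof. by apply/eqP; move: a; apply: all_z4; vm_compute. Qed.
Lemma F1 (u : Z4) : u * 2 != 0 -> forall a : Z4,
   (chi (a + (u + u)) = - chi a) /\ (chi (a + u) ^+ 2 + chi a ^+ 2 = 1).
Proof.
have H : all (fun u => (u * 2 != 0) ==> all (fun a =>
   (chi (a + (u + u)) == - chi a) && (chi (a + u) ^+ 2 + chi a ^+ 2 == 1)) z4s) z4s.
  by vm_compute.
move/allP: H => /(_ u (z4sP u)) /implyP H /H /allP H' a.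
by have /andP[/eqP -> /eqP ->] := H' a (z4sP a).
Qed.
Definition cands : seq (Z4 * Z4) := [:: (1,0); (0,1); (2,0); (0,2); (1,1)].
Lemma F2 (r1 r2 s1 s2 : Z4) : r1 * 1 + r2 * 1 != 0 -> s1 * 1 + s2 * (-1) != 0 ->
  exists c1 c2 : Z4, forall a b : Z4,
     chi (a + (c1 * r1 + c2 * s1)) * chi (b + (c1 * r2 + c2 * s2)) = - (chi a * chi b).
Proof.
have H : all (fun r1 => all (fun r2 => all (fun s1 => all (fun s2 =>
  ((r1 * 1 + r2 * 1 != 0) && (s1 * 1 + s2 * (-1) != 0)) ==>
  has (fun c => let t1 := c.1 * r1 + c.2 * s1 in let t2 := c.1 * r2 + c.2 * s2 in
     ((t1 == 2) && (t2 == 0)) || ((t1 == 0) && (t2 == 2))) cands) z4s) z4s) z4s) z4s.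
  by vm_compute.
have K : all (fun a => all (fun b => (chi (a + 2) * chi (b + 0) == - (chi a * chi b))
   && (chi (a + 0) * chi (b + 2) == - (chi a * chi b))) z4s) z4s.
  by vm_compute.
move=> h1 h2.
move/allP: H => /(_ r1 (z4sP r1)) /allP /(_ r2 (z4sP r2)) /allP /(_ s1 (z4sP s1)) /allP /(_ s2 (z4sP s2)).
rewrite h1 h2 andbT implyTb => /hasP [[c1 c2] _ Hc]; rewrite /= in Hc.
exists c1, c2 => a b.
move/allP: K => /(_ a (z4sP a)) /allP /(_ b (z4sP b)) /andP [K1 K2].
by case/orP: Hc => /andP [/eqP -> /eqP ->]; apply/eqP.
Qed.
Lemma sum_shift n (C : {set 'rV[Z4]_n}) (f : 'rV[Z4]_n -> int) t :
  is_Z4_linear C -> t \in C -> \sum_(x in C) f (x + t) = \sum_(x in C) f x.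
Proof.
move=> [C0 CD CZ] tC.
rewrite [RHS](reindex (fun x => x + t)) /=; last first.
  by exists (fun x => x - t) => x _; rewrite ?addrK ?subrK.
apply: eq_bigl => x; apply/idP/idP => [xC|]; first exact: CD.
by move=> xtC; have := CD _ _ xtC (CZ (-1) _ tC); rewrite scaleN1r addrK.
Qed.

Lemma sum_anti n (C : {set 'rV[Z4]_n}) (f : 'rV[Z4]_n -> int) t :
  is_Z4_linear C -> t \in C ->
  (forall x, f (x + t) = - f x) -> \sum_(x in C) f x = 0.
Proof.
move=> CL tC H; have := sum_shift f CL tC.
under eq_bigr => x _ do rewrite H.
rewrite sumrN; set S := (\sum_(x in C) f x) => E.
have : S *+ 2 == 0 by rewrite mulr2n -{1}E addNr.
by rewrite Num.Theory.mulrn_eq0 => /eqP.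

Qed.

Lemma sum_half n (C : {set 'rV[Z4]_n}) (f : 'rV[Z4]_n -> int) t :
  is_Z4_linear C -> t \in C ->
  (forall x, f (x + t) + f x = 1) -> (\sum_(x in C) f x) *+ 2 = #|C|%:Z.
Proof.
move=> CL tC H.
have E : \sum_(x in C) (f (x + t) + f x) = #|C|%:Z.
  by under eq_bigr => x _ do rewrite H; rewrite sumr_const natz.
by rewrite big_split /= sum_shift // in E; rewrite mulr2n.
Qed.

Definition ei n (i : 'I_n) (a : Z4) : 'rV[Z4]_n := \row_k (if k == i then a else 0).

Lemma dot_ei n (x : 'rV[Z4]_n) i a : \sum_k x ord0 k * ei i a ord0 k = x ord0 i * a.
Proof.
rewrite (bigD1 i) //= big1 ?addr0; first by rewrite mxE eqxx.
by move=> k /negbTE kNi; rewrite mxE kNi mulr0.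
Qed.

Lemma dot_add n (x y z : 'rV[Z4]_n) : \sum_k x ord0 k * (y + z) ord0 k =
  \sum_k x ord0 k * y ord0 k + \sum_k x ord0 k * z ord0 k.
Proof. by rewrite -big_split; apply: eq_bigr => k _; rewrite mxE mulrDr. Qed.

Lemma wL_ei n (i : 'I_n) a : wL (ei i a) = leeZ4 a.
Proof.
rewrite /wL (bigD1 i) //= big1 ?addn0; first by rewrite mxE eqxx.
by move=> k /negbTE kNi; rewrite mxE kNi.
Qed.

Lemma wL_ei2 n (i j : 'I_n) a b : i != j -> wL (ei i a + ei j b) = (leeZ4 a + leeZ4 b)%N.
Proof.
move=> ij; rewrite /wL (bigD1 i) //= (bigD1 j) /=; last by rewrite eq_sym.
rewrite big1 ?addn0.
  have ji : (j == i) = false by rewrite eq_sym (negbTE ij).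
  by rewrite !mxE !eqxx (negbTE ij) ji addr0 add0r.
by move=> k /andP [ki kj]; rewrite !mxE (negbTE ki) (negbTE kj) addr0.
Qed.

Lemma ei_neq0 n (i : 'I_n) a : a != 0 -> ei i a != 0.
Proof. by move=> a0; apply/eqP => /rowP /(_ i); rewrite !mxE eqxx; apply/eqP. Qed.

Lemma ei2_neq0 n (i j : 'I_n) a b : i != j -> a != 0 -> ei i a + ei j b != 0.
Proof.
move=> ij a0; apply/eqP => /rowP /(_ i).
by rewrite !mxE eqxx (negbTE ij) addr0; apply/eqP.
Qed.

Lemma witness n (C : {set 'rV[Z4]_n}) y : projective C -> y != 0 -> (wL y <= 2)%N ->
  exists2 x, x \in C & \sum_k x ord0 k * y ord0 k != 0.
Proof.
move=> P y0 wy.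
case: (boolP (y \in dual_code C)) => [yd | ].
  by have := P _ yd y0; rewrite leqNgt ltnS wy.
rewrite inE negb_forall => /existsP [x]; rewrite negb_imply => /andP [xC nz].
by exists x.
Qed.

Definition g n (x : 'rV[Z4]_n) : int := \sum_i chi (x ord0 i).

Lemma coord_wit n (C : {set 'rV[Z4]_n}) (i : 'I_n) : projective C ->
  exists2 u, u \in C & u ord0 i * 2 != 0.
Proof.
move=> P; have [||u uC] := @witness n C (ei i 2) P.
- exact: ei_neq0.
- by rewrite wL_ei.
by rewrite dot_ei => h; exists u.
Qed.

Lemma sum_chi1 n (C : {set 'rV[Z4]_n}) i : is_Z4_linear C -> projective C ->
  \sum_(x in C) chi (x ord0 i) = 0.
Proof.
move=> CL P; have [u uC u2] := coord_wit i P.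
have [_ CD _] := CL.
apply: (sum_anti (t := u + u) CL (CD _ _ uC uC)) => x.
by rewrite !mxE; case: (F1 u2 (x ord0 i)).
Qed.

Lemma sum_chi_sq n (C : {set 'rV[Z4]_n}) i : is_Z4_linear C -> projective C ->
  (\sum_(x in C) chi (x ord0 i) * chi (x ord0 i)) *+ 2 = #|C|%:Z.
Proof.
move=> CL P; have [u uC u2] := coord_wit i P.
apply: (sum_half (t := u) CL uC) => x.
by rewrite !mxE -!expr2; case: (F1 u2 (x ord0 i)).
Qed.

Lemma sum_chi_pair n (C : {set 'rV[Z4]_n}) i j : is_Z4_linear C -> projective C ->
  i != j -> \sum_(x in C) chi (x ord0 i) * chi (x ord0 j) = 0.
Proof.
move=> CL P ij.
have [||r rC hr] := @witness n C (ei i 1 + ei j 1) P.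
- exact: ei2_neq0.
- by rewrite wL_ei2.
have [||s sC hs] := @witness n C (ei i 1 + ei j (-1)) P.
- exact: ei2_neq0.
- by rewrite wL_ei2.
rewrite dot_add !dot_ei in hr; rewrite dot_add !dot_ei in hs.
have [c1 [c2 H]] := F2 hr hs.
have [_ CD CZ] := CL.
apply: (sum_anti (t := c1 *: r + c2 *: s) CL (CD _ _ (CZ _ _ rC) (CZ _ _ sC))) => x.
by rewrite !mxE; apply: H.
Qed.

Lemma sum_g n (C : {set 'rV[Z4]_n}) : is_Z4_linear C -> projective C ->
  \sum_(x in C) g x = 0.
Proof.
move=> CL P; rewrite /g exchange_big big1 // => i _; exact: sum_chi1.
Qed.

Lemma sum_g2 n (C : {set 'rV[Z4]_n}) : is_Z4_linear C -> projective C ->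
  (\sum_(x in C) g x ^+ 2) *+ 2 = #|C|%:Z *+ n.
Proof.
move=> CL P.
under eq_bigr => x _ do rewrite /g expr2 big_distrlr /=.
rewrite exchange_big /= -sumrMnl.
rewrite (eq_bigr (fun _ => #|C|%:Z)); first by rewrite sumr_const card_ord.
move=> i _; rewrite exchange_big /= -sumrMnl (bigD1 i) //= sum_chi_sq // big1 ?addr0 // => j ji.
by rewrite eq_sym in ji; rewrite sum_chi_pair // mul0rn.
Qed.

Lemma wL_int n (x : 'rV[Z4]_n) : (wL x)%:Z = n%:Z - g x.
Proof.
rewrite /wL /g -natz natr_sum.
rewrite (eq_bigr (fun i => 1 - chi (x ord0 i))); last by move=> i _; rewrite natz lee_chi.
by rewrite sumrB sumr_const card_ord natz.
Qed.

Lemma wL0 n : wL (0 : 'rV[Z4]_n) = 0%N.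
Proof. by rewrite /wL big1 // => i _; rewrite mxE. Qed.

Lemma keyE n (C : {set 'rV[Z4]_n}) w1 w2 : is_Z4_linear C -> projective C ->
  nonzero_weights_are C w1 w2 ->
  2 * (#|C|%:Z * ((n%:Z - w1%:Z) * (n%:Z - w2%:Z))) + #|C|%:Z * n%:Z = 2 * (w1%:Z * w2%:Z).
Proof.
move=> CL P NW.
have Z : \sum_(x in C) ((wL x)%:Z - w1%:Z) * ((wL x)%:Z - w2%:Z) = w1%:Z * w2%:Z.
  have [C0 _ _] := CL.
  rewrite (bigD1 0) //= wL0 big1 ?addr0; first by rewrite !sub0r mulrNN.
  move=> x /andP [xC x0].
  have /NW [] : exists2 y, y \in C & y != 0 /\ wL y = wL x by exists x.
    by move=> ->; rewrite subrr mul0r.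
  by move=> ->; rewrite subrr mulr0.
have E : \sum_(x in C) ((wL x)%:Z - w1%:Z) * ((wL x)%:Z - w2%:Z) =
   \sum_(x in C) (((n%:Z - w1%:Z) * (n%:Z - w2%:Z) - (2 * n%:Z - w1%:Z - w2%:Z) * g x) + g x ^+ 2).
  apply: eq_bigr => x _; rewrite wL_int.
  move: (g x) => G. ring.
rewrite E big_split /= in Z. 
rewrite sumrB in Z. 
rewrite sumr_const in Z.
rewrite -mulr_sumr in Z.
rewrite sum_g // mulr0 subr0 in Z.
have T2 := sum_g2 CL P.
move: Z T2; move: (\sum_(i in C) g i ^+ 2) => T.
have e1 : forall (x : int) k, x *+ k = x * k%:Z by move=> x k; rewrite -natz mulr_natr.
move=> Z T2; rewrite !e1 in Z T2.
rewrite -T2 -Z; ring.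
Qed.
Lemma a1 (M n w1 w2 : nat) : (0 < n)%N -> (1 < M)%N -> (w1 < w2)%N ->
  2 * (M%:Z * ((n%:Z - w1%:Z) * (n%:Z - w2%:Z))) + M%:Z * n%:Z = 2 * (w1%:Z * w2%:Z) ->
  w1 = n -> (2 * w2)%N = M.
Proof. move=> *; subst. nia. Qed.
Lemma a2 (M n w1 w2 : nat) : (0 < n)%N -> (1 < M)%N -> (w1 < w2)%N ->
  2 * (M%:Z * ((n%:Z - w1%:Z) * (n%:Z - w2%:Z))) + M%:Z * n%:Z = 2 * (w1%:Z * w2%:Z) ->
  (2 * w2)%N = M -> w1 = n.
Proof.
move=> hn hM hw E hM2; subst M.
have E' : 2 * (w1%:Z - n%:Z) * (w2%:Z - n%:Z) + n%:Z = w1%:Z.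
  have h : (w2%:Z * 2) * (2 * (w1%:Z - n%:Z) * (w2%:Z - n%:Z) + n%:Z - w1%:Z) = 0.
    rewrite PoszM in E.
    move/(congr1 (fun z => z - 2 * (w1%:Z * w2%:Z))): E; rewrite subrr => <-; ring.
  move/eqP: h; rewrite mulf_eq0 => /orP [/eqP h|/eqP h]; first lia.
  by apply/eqP; rewrite -subr_eq0; apply/eqP.
have : (w1%:Z - n%:Z) * (2 * (w2%:Z - n%:Z) - 1) = 0.
  move/(congr1 (fun z => z - w1%:Z)): E'; rewrite subrr => <-; ring.
move/eqP; rewrite mulf_eq0 => /orP [/eqP h|/eqP h]; lia.
Qed.
Lemma a3 (M n w2 : nat) : (0 < n)%N -> (n < w2)%N -> (2 * w2)%N = M ->
  n = ((M * n) %/ (M - 1))%N.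
Proof.
move=> hn hw hM.
have -> : (M * n = n * (M - 1) + n)%N by subst; nia.
rewrite divnMDl; last by lia.
rewrite divn_small ?addn0 //; lia.
Qed.
Lemma a4 (M n w1 w2 : nat) : (0 < n)%N -> (1 < M)%N -> (w1 < w2)%N ->
  2 * (M%:Z * ((n%:Z - w1%:Z) * (n%:Z - w2%:Z))) + M%:Z * n%:Z = 2 * (w1%:Z * w2%:Z) ->
  w1 = ((M * n) %/ (M - 1))%N -> w1 = n.
Proof.
move=> hn hM hw E hd.
have h1 := divn_eq (M * n) (M - 1).
have h2 : ((M * n) %% (M - 1) < M - 1)%N by rewrite ltn_pmod //; lia.
rewrite -hd in h1.
move: h2 h1; move: ((M * n) %% (M - 1))%N => r h2 h1.
case: M hM E h1 h2 {hd} => [//|K] hK E h1 h2.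
rewrite subn1 /= in h1 h2.
have [lt|gt|eq] := ltngtP w1 n; last by [].
- exfalso.
  have : ((w1 + 1) * K <= n * K)%N by rewrite leq_mul2r; lia.
  lia.

exfalso.
move: (w1 - n)%N (subnK (ltnW gt)) => q hq.
rewrite -hq in E h1 hw gt.
have hqK : (q * K <= n)%N by lia.
have F : 2 * w2%:Z * (q%:Z * K%:Z - n%:Z) + K.+1%:Z * n%:Z * (1 - 2 * q%:Z) = 0.
  move/(congr1 (fun z => z - 2 * ((q + n)%N%:Z * w2%:Z))): E; rewrite subrr => <-.
  rewrite !PoszD; ring.
have P1 : w2%:Z * (q%:Z * K%:Z - n%:Z) <= 0.
  apply: Num.Theory.mulr_ge0_le0 => //; lia.
have P2 : K.+1%:Z * n%:Z * (1 - 2 * q%:Z) < 0.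
  rewrite Num.Theory.pmulr_rlt0; lia.
lia.
Qed.

Lemma bigmin_le (T : eqType) (s : seq T) (P : pred T) (F : T -> nat) d y :
  y \in s -> P y -> (\big[minn/d]_(x <- s | P x) F x <= F y)%N.
Proof.
elim: s => // a s IH; rewrite inE big_cons => /orP [/eqP <-|ys] Py.
  by rewrite Py geq_minl.
case: (P a); last exact: IH.
exact: leq_trans (geq_minr _ _) (IH ys Py).
Qed.

Lemma lee_le2 (a : Z4) : (leeZ4 a <= 2)%N.
Proof. by move: a; apply: all_z4; vm_compute. Qed.

Lemma wL_le n (x : 'rV[Z4]_n) : (wL x <= 2 * n)%N.
Proof.
have h : (\sum_(i < n) leeZ4 (x ord0 i) <= \sum_(i < n) 2)%N.
  by apply: leq_sum => i _; exact: lee_le2.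
by rewrite sum_nat_const card_ord mulnC in h.
Qed.

Theorem corollary4p4 (n : nat) (C : {set 'rV[Z4]_n}) (w1 w2 : nat) :
  is_Z4_linear C -> projective C ->
  (w1 < w2)%N -> nonzero_weights_are C w1 w2 ->
  [/\ (plotkin_optimal C <-> w1 = n),
      (w1 = n <-> (2 * w2)%N = #|C|) &
      (plotkin_optimal C <-> (2 * w2)%N = #|C|)].
Proof.
move=> CL P hw NW.
have E := keyE CL P NW.
have [x1 x1C [x10 wx1]] : exists2 x, x \in C & x != 0 /\ wL x = w1 by apply/NW; left.
have [x2 x2C [x20 wx2]] : exists2 x, x \in C & x != 0 /\ wL x = w2 by apply/NW; right.
have hn : (0 < n)%N.
  case: n C CL P NW E x1 x1C x10 wx1 x2 x2C x20 wx2 => // C CL P NW E x1 x1C x10 wx1 x2 x2C x20 wx2.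
  by move: wx2; rewrite /wL big_ord0 => w20; rewrite -w20 in hw.
have hM : (1 < #|C|)%N.
  have [C0 _ _] := CL.
  by apply/card_gt1P; exists 0, x1; rewrite C0 x1C eq_sym x10.
have hdL : dL C = w1.
  apply/eqP; rewrite eqn_leq; apply/andP; split.
    rewrite -wx1; apply: bigmin_le; first exact: mem_index_enum.
    by rewrite x1C x10.
  apply: (big_ind (fun v => w1 <= v)%N).
  - by rewrite -wx1 wL_le.
  - by move=> a b ha hb; rewrite leq_min ha hb.
  move=> x /andP [xC x0].
  have /NW [] : exists2 y, y \in C & y != 0 /\ wL y = wL x by exists x.
    by move=> ->.
  by move=> ->; apply: ltnW.
have H12 : w1 = n <-> (2 * w2)%N = #|C|.
  split; [exact: a1 hn hM hw E | exact: a2 hn hM hw E].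
have H1 : plotkin_optimal C <-> w1 = n.
  rewrite /plotkin_optimal hdL; split.
    exact: a4 hn hM hw E.
  move=> e; have hnw : (n < w2)%N by rewrite -e.
  have := a3 hn hnw ((proj1 H12) e).
  by rewrite {1}e.
split => //.
by rewrite H1.
Qed.
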